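(* Let $\lambda\ge\omega$ and $\mu$ be cardinals and $n\ge2$, $k\ge1$ natural numbers such that the partition relation $\lambda\to(n)^{n-1}_{\mu^k}$ holds. Then $\chi_{\rm CF}(\lambda,t,k+1)>\mu$ for every natural number $t$ with $k<t\le n\cdot k$ if $n>2$, and for every even natural number $t$ with $k<t\le 2k$ if $n=2$.
   Context: $\lambda\to(n)^{r}_{\theta}$ means: for every coloring of the $r$-element subsets of $\lambda$ with $\theta$ colors there is an $n$-element subset of $\lambda$ all of whose $r$-element subsets get the same color. For a family $\mathcal A$ and cardinal $\rho$, $f:\bigcup\mathcal A\to\rho$ is a conflict free coloring of $\mathcal A$ if for every $A\in\mathcal A$ some $\zeta<\rho$ has $|A\cap f^{-1}\{\zeta\}|=1$; $\chi_{\rm CF}(\mathcal A)$ is the least such $\rho$. A $(\lambda,\kappa,\mu)$-system is a family of $\lambda$ sets each of size $\kappa$, distinct members meeting in fewer than $\mu$ points; $\chi_{\rm CF}(\lambda,\kappa,\mu)$ is the supremum of $\chi_{\rm CF}(\mathcal A)$ over all $(\lambda,\kappa,\mu)$-systems. *)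

(* Defs.v *)
(* Cardinals are represented by types:
   the cardinal lambda by a (choice) type L, mu by a type M. *)
From mathcomp Require Import all_boot.
From mathcomp Require Export finmap.
Set Implicit Arguments. Unset Strict Implicit. Unset Printing Implicit Defensive.
Open Scope fset_scope.

Definition infinite_type (L : choiceType) : Prop :=
  ~ exists s : seq L, forall x : L, x \in s.

Definition partition_rel (L : choiceType) (C : Type) (n r : nat) : Prop :=
  forall c : {fset L} -> C,
    exists H : {fset L}, #|` H| = n /\
      exists col : C, forall S : {fset L}, S `<=` H -> #|` S| = r -> c S = col.

(* A (lambda, kappa, mu)-system (kappa, mu finite here): a family of |L| sets
   (indexed injectively by L, so the members are distinct), each of size
   kappa, distinct members meeting in fewer than mu points. *)
Definition is_system (L : Type) (X : choiceType) (A : L -> {fset X})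
    (kappa mu : nat) : Prop :=
  injective A /\ (forall i, #|` A i| = kappa) /\
  (forall i j, i <> j -> #|` A i `&` A j| < mu).

Definition conflict_free (L X M : Type) (A : L -> X -> Prop) (f : X -> M) : Prop :=
  forall i, exists zeta : M, exists x, A i x /\ f x = zeta /\
     forall y, A i y -> f y = zeta -> y = x.

Definition chiCF_gt (L : Type) (X : choiceType) (A : L -> {fset X}) (M : Type) : Prop :=
  ~ exists f : X -> M, conflict_free (fun i x => x \in A i) f.

(* chi_CF(|L|, kappa, mu) > |M| : the supremum over all (|L|,kappa,mu)-systems
   exceeds |M|, i.e. some such system has chi_CF > |M|. *)
Definition chiCF_sys_gt (L : Type) (kappa mu : nat) (M : Type) : Prop :=
  exists (X : choiceType) (A : L -> {fset X}), is_system A kappa mu /\ chiCF_gt A M.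

(* Main.v *)
Require Import Defs.
From mathcomp Require Import all_boot finmap.
From mathcomp Require Import zify boolp classical_sets.
Set Implicit Arguments. Unset Strict Implicit. Unset Printing Implicit Defensive.

Section CardA.
Local Close Scope fset_scope.
Local Open Scope classical_set_scope.

Section Card.
Variable L : choiceType.
Hypothesis HL : ~ exists s : seq L, forall x : L, x \in s.

Lemma inf_fresh (s : seq L) : exists x, x \notin s.
Proof.
apply: contrapT => H; apply: HL; exists s => x; apply: contrapT => Hx; apply: H.
by exists x; apply/negP.
Qed.

Lemma nu_exists : exists nu : nat -> L, injective nu.
Proof.
pose fresh (s : seq L) := xchoose (inf_fresh s).
have freshP s : fresh s \notin s := xchooseP (inf_fresh s).
pose fix build n := if n is n'.+1 then fresh (build n') :: build n' else [::].
pose nu n := fresh (build n).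
have inb n m : m < n -> nu m \in build n.
  elim: n => // n IH; rewrite ltnS leq_eqVlt => /orP[/eqP->|/IH H].
    by rewrite /= inE eqxx.
  by rewrite /= inE H orbT.
exists nu => m n Hmn; apply/eqP; apply: contraT => Hne.
case: (ltngtP m n) Hne => // Hlt _.
  by move: (freshP (build n)); rewrite -/(nu n) -Hmn inb.
by move: (freshP (build m)); rewrite -/(nu m) Hmn inb.
Qed.
End Card.

End CardA.

Section CardB.
Local Close Scope fset_scope.
Local Open Scope classical_set_scope.

Section Compar.
Variable L : Type.
Variable A : L -> Prop.

Lemma compar :
  (exists h : L -> L, (forall a, A a -> ~ A (h a)) /\
      (forall a a', A a -> A a' -> h a = h a' -> a = a')) \/
  (exists h : L -> L, (forall b, ~ A b -> A (h b)) /\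
      (forall b b', ~ A b -> ~ A b' -> h b = h b' -> b = b')).
Proof.
pose P (R : set (L * L)) :=
  (forall a b, R (a, b) -> A a /\ ~ A b) /\
  (forall a b b', R (a, b) -> R (a, b') -> b = b') /\
  (forall a a' b, R (a, b) -> R (a', b) -> a = a').
have chainP F : F `<=` P -> total_on F subset -> P (\bigcup_(X in F) X).
  move=> FP Ftot; split; [|split].
  - by move=> a b [X FX XR]; case: (FP X FX) => H _; exact: H.
  - move=> a b b' [X FX Xab] [Y FY Yab].
    case: (Ftot X Y FX FY) => [XY|YX].
      by case: (FP Y FY) => _ [H _]; apply: H (XY _ Xab) Yab.
    by case: (FP X FX) => _ [H _]; apply: H Xab (YX _ Yab).
  - move=> a a' b [X FX Xab] [Y FY Yab].
    case: (Ftot X Y FX FY) => [XY|YX].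
      by case: (FP Y FY) => _ [_ H]; apply: H (XY _ Xab) Yab.
    by case: (FP X FX) => _ [_ H]; apply: H Xab (YX _ Yab).
have [R [PR Rmax]] := Zorn_bigcup chainP.
case: PR => Rdom [Rfun Rinj].
have [H1|H1] := pselect (forall a, A a -> exists b, R (a, b)).
  have : forall a, exists b, A a -> R (a, b).
    move=> a; have [Aa|nAa] := pselect (A a).
      by have [b Hb] := H1 a Aa; exists b.
    by exists a.
  case/choice => h Hh; left; exists h; split.
    by move=> a Aa; case: (Rdom _ _ (Hh a Aa)).
  by move=> a a' Aa Aa' E; apply: (Rinj a a' (h a)) (Hh a Aa) _; rewrite E; apply: Hh.
have [H2|H2] := pselect (forall b, ~ A b -> exists a, R (a, b)).
  have : forall b, exists a, ~ A b -> R (a, b).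
    move=> b; have [Ab|nAb] := pselect (A b).
      by exists b.
    by have [a Ha] := H2 b nAb; exists a.
  case/choice => h Hh; right; exists h; split.
    by move=> b nAb; case: (Rdom _ _ (Hh b nAb)).
  by move=> b b' nAb nAb' E; apply: (Rfun (h b) b b') (Hh b nAb) _; rewrite E; apply: Hh.
exfalso.
have [a [Aa Ha]] : exists a, A a /\ forall b, ~ R (a, b).
  apply: contrapT => N; apply: H1 => a Aa; apply: contrapT => N2; apply: N.
  by exists a; split => // b Rab; apply: N2; exists b.
have [b [nAb Hb]] : exists b, ~ A b /\ forall a, ~ R (a, b).
  apply: contrapT => N; apply: H2 => b nAb; apply: contrapT => N2; apply: N.
  by exists b; split => // a' Rab; apply: N2; exists a'.
apply: (Rmax (fun q => R q \/ q = (a, b))).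
  split; first by move=> q Rq; left.
  by move=> /(_ (a, b) (or_intror erefl)) /Ha.
split; [|split].
- by move=> x y [/Rdom //|[-> ->]].
- move=> x y y' [Rxy|[E1 E2]] [Rxy'|[E3 E4]]; subst => //.
  + exact: Rfun Rxy Rxy'.
  + by move/Ha: Rxy.
  + by move/Ha: Rxy'.
- move=> x x' y [Rxy|[E1 E2]] [Rxy'|[E3 E4]]; subst => //.
  + exact: Rinj Rxy Rxy'.
  + by move/Hb: Rxy.
  + by move/Hb: Rxy'.
Qed.
End Compar.

End CardB.

Section CardC.
Local Close Scope fset_scope.
Local Open Scope classical_set_scope.

Section Main.
Variable L : Type.
Variable nu : nat -> L.
Hypothesis nu_inj : injective nu.

Local Notation T := (L + ((L * L) * L))%type.
Definition AS (S : set T) x := S (inl x).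
Definition GS (S : set T) q z := S (inr (q, z)).
Definition Good (S : set T) :=
  [/\ (forall q z z', GS S q z -> GS S q z' -> z = z'),
      (forall q q' z, GS S q z -> GS S q' z -> q = q'),
      (forall q z, GS S q z -> [/\ AS S q.1, AS S q.2 & AS S z]),
      (forall x y, AS S x -> AS S y -> exists z, GS S (x, y) z) &
      ((forall e, ~ S e) \/ (forall i, i < 3 -> AS S (nu i)))].

Lemma good_chain F : F `<=` Good -> total_on F subset -> Good (\bigcup_(X in F) X).
Proof.
move=> FP Ftot.
have big X Y e e' : F X -> F Y -> X e -> Y e' -> exists2 Z, F Z & Z e /\ Z e'.
  move=> FX FY Xe Ye'; case: (Ftot X Y FX FY) => [XY|YX].
    by exists Y => //; split => //; apply: XY.
  by exists X => //; split => //; apply: YX.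
split.
- move=> q z z' [X FX Xe] [Y FY Ye].
  have [Z FZ [Z1 Z2]] := big _ _ _ _ FX FY Xe Ye.
  by case: (FP Z FZ) => H _ _ _ _; apply: H Z1 Z2.
- move=> q q' z [X FX Xe] [Y FY Ye].
  have [Z FZ [Z1 Z2]] := big _ _ _ _ FX FY Xe Ye.
  by case: (FP Z FZ) => _ H _ _ _; apply: H Z1 Z2.
- move=> q z [X FX Xe]; case: (FP X FX) => _ _ H _ _.
  by case: (H _ _ Xe) => H1 H2 H3; split; exists X.
- move=> x y [X FX Xe] [Y FY Ye].
  have [Z FZ [Z1 Z2]] := big _ _ _ _ FX FY Xe Ye.
  case: (FP Z FZ) => _ _ _ H _; case: (H _ _ Z1 Z2) => z Hz.
  by exists z; exists Z.
- have [[e [X FX Xe]]|N] := pselect (exists e, (\bigcup_(X in F) X) e); last first.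
    by left => e He; apply: N; exists e.
  right => i Hi; case: (FP X FX) => _ _ _ _ [/(_ e Xe) //|H].
  by exists X => //; apply: H.
Qed.

Lemma pairing : exists pr : L -> L -> L,
  forall x y x' y', pr x y = pr x' y' -> x = x' /\ y = y'.
Proof.
have [S [GoodS Smax]] := Zorn_bigcup good_chain.
case: GoodS => Gfun Ginj Gdom Gtot Gne.
pose A := AS S.
have Anu : forall i, i < 3 -> A (nu i).
  case: Gne => // Hemp; exfalso.
  pose S0 : set T := fun e => match e with
    | inl x => exists i, x = nu i
    | inr (q, z) => exists i j, q = (nu i, nu j) /\ z = nu (choice.pickle (i, j)) end.
  apply: (Smax S0).
    split; first by move=> e /Hemp.
    by move=> /(_ (inl (nu 0))) H; apply: (Hemp (inl (nu 0))); apply: H; exists 0.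
  split.
  - by move=> q z z' [i [j [-> ->]]] [i' [j' [/pair_equal_spec [/nu_inj -> /nu_inj ->] ->]]].
  - move=> q q' z [i [j [-> ->]]] [i' [j' [-> /nu_inj /(pcan_inj (@pickleK_inv _)) E]]].
    by case: E => -> ->.
  - by move=> q z [i [j [-> ->]]]; split; [exists i|exists j|exists (choice.pickle (i, j))].
  - by move=> x y [i ->] [j ->]; exists (nu (choice.pickle (i, j))); exists i, j.
  - by right => i _; exists i.
have : forall q : L * L, exists z, A q.1 -> A q.2 -> GS S q z.
  case=> x y; have [[Ax Ay]|N] := pselect (A x /\ A y).
    by have [z Hz] := Gtot x y Ax Ay; exists z.
  by exists x => Ax Ay; case: N.
case/choice => g Hg.
have gA x y : A x -> A y -> A (g (x, y)).
  by move=> Ax Ay; case: (Gdom _ _ (Hg (x, y) Ax Ay)).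
have ginj x y x' y' : A x -> A y -> A x' -> A y' -> g (x, y) = g (x', y') ->
    x = x' /\ y = y'.
  move=> Ax Ay Ax' Ay' E.
  have := Ginj _ _ _ (Hg (x, y) Ax Ay); rewrite E => /(_ _ (Hg (x', y') Ax' Ay')).
  by case.
case: (compar A) => [[h [hA hinj]]|[h [hA hinj]]]; last first.
  pose phi x := if pselect (A x) then g (nu 0, x) else g (nu 1, h x).
  have phiA x : A (phi x).
    by rewrite /phi; case: pselect => Ax; apply: gA => //; [apply: Anu|apply: Anu|apply: hA].
  have phiinj x x' : phi x = phi x' -> x = x'.
    rewrite /phi; case: pselect => Ax; case: pselect => Ax' E.
    + by case: (ginj _ _ _ _ (Anu 0 isT) Ax (Anu 0 isT) Ax' E).
    + by case: (ginj _ _ _ _ (Anu 0 isT) Ax (Anu 1 isT) (hA _ Ax') E) => /nu_inj.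
    + by case: (ginj _ _ _ _ (Anu 1 isT) (hA _ Ax) (Anu 0 isT) Ax' E) => /nu_inj.
    + by case: (ginj _ _ _ _ (Anu 1 isT) (hA _ Ax) (Anu 1 isT) (hA _ Ax') E) => _ /hinj; apply.
  exists (fun x y => g (phi x, phi y)) => x y x' y' E.
  by case: (ginj _ _ _ _ (phiA x) (phiA y) (phiA x') (phiA y') E) => /phiinj -> /phiinj ->.
exfalso.
pose lift i u v := if i == 0 then (u, h v) else if i == 1 then (h u, v) else (h u, h v).
have lift_inj i j u v u' v' : i < 3 -> j < 3 -> A u -> A v -> A u' -> A v' ->
    lift i u v = lift j u' v' -> [/\ i = j, u = u' & v = v'].
  move=> Hi Hj Au Av Au' Av'.
  case: i Hi => [|[|[|//]]] _; case: j Hj => [|[|[|//]]] _;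
   rewrite /lift /= => /pair_equal_spec [E1 E2];
   first [ by split => //; apply: hinj
         | by split => //; [apply: hinj|apply: hinj]
         | by exfalso; apply: (hA _ Au'); rewrite -E1
         | by exfalso; apply: (hA _ Au); rewrite E1
         | by exfalso; apply: (hA _ Av'); rewrite -E2
         | by exfalso; apply: (hA _ Av); rewrite E2 ].
pose A' x := A x \/ exists b, A b /\ x = h b.
pose N q z := exists i u v, [/\ i < 3, A u, A v, q = lift i u v &
                             z = h (g (nu i, g (u, v)))].
pose S' : set T := fun e => match e with
    | inl x => A' x
    | inr (q, z) => GS S q z \/ N q z end.
apply: (Smax S').
  split; first by case=> [x|[q z]] Se; left.
  move=> /(_ (inl (h (nu 0)))) H.
  by apply: (hA (nu 0) (Anu 0 isT)); apply: H; right; exists (nu 0); split => //; apply: Anu.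
have Nz q z : N q z -> exists2 w, A w & z = h w.
  move=> [i [u [v [Hi Au Av _ ->]]]]; exists (g (nu i, g (u, v))) => //.
  exact: gA (Anu i Hi) (gA _ _ Au Av).
have liftnA i u v : i < 3 -> A u -> A v -> ~ (A (lift i u v).1 /\ A (lift i u v).2).
  move=> Hi Au Av; case: i Hi => [|[|[|//]]] _ /= [H1 H2].
  - exact: hA Av H2.
  - exact: hA Au H1.
  - exact: hA Au H1.
have liftA i u v : i < 3 -> A u -> A v -> A' (lift i u v).1 /\ A' (lift i u v).2.
  move=> Hi Au Av; case: i Hi => [|[|[|//]]] _ /=; split;
   by [left | right; exists u | right; exists v].
split.
- move=> q z z' [Gz|Nz1] [Gz'|Nz2].
  + exact: Gfun Gz Gz'.
  + case: Nz2 => [i [u [v [Hi Au Av Eq _]]]]; case: (Gdom _ _ Gz) => H1 H2 _.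
    by case: (liftnA i u v Hi Au Av); rewrite -Eq.
  + case: Nz1 => [i [u [v [Hi Au Av Eq _]]]]; case: (Gdom _ _ Gz') => H1 H2 _.
    by case: (liftnA i u v Hi Au Av); rewrite -Eq.
  + case: Nz1 => [i [u [v [Hi Au Av Eq ->]]]].
    case: Nz2 => [j [u' [v' [Hj Au' Av' Eq' ->]]]].
    by case: (lift_inj _ _ _ _ _ _ Hi Hj Au Av Au' Av'); rewrite -?Eq -?Eq' // => -> -> ->.
- move=> q q' z [Gz|Nz1] [Gz'|Nz2].
  + exact: Ginj Gz Gz'.
  + case: (Nz _ _ Nz2) => w Aw Ez; case: (Gdom _ _ Gz) => _ _.
    by rewrite Ez => Ahw; exfalso; exact: hA _ Aw Ahw.
  + case: (Nz _ _ Nz1) => w Aw Ez; case: (Gdom _ _ Gz') => _ _.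
    by rewrite Ez => Ahw; exfalso; exact: hA _ Aw Ahw.
  + case: Nz1 => [i [u [v [Hi Au Av -> Ez]]]].
    case: Nz2 => [j [u' [v' [Hj Au' Av' -> Ez']]]].
    have AGi : A (g (nu i, g (u, v))) by exact: gA (Anu i Hi) (gA _ _ Au Av).
    have AGj : A (g (nu j, g (u', v'))) by exact: gA (Anu j Hj) (gA _ _ Au' Av').
    move: (hinj _ _ AGi AGj (etrans (esym Ez) Ez')).
    move/(ginj _ _ _ _ (Anu i Hi) (gA _ _ Au Av) (Anu j Hj) (gA _ _ Au' Av')).
    case=> /nu_inj -> /(ginj _ _ _ _ Au Av Au' Av') [-> ->] //.
- move=> q z [Gz|Nz1].
  + by case: (Gdom _ _ Gz) => H1 H2 H3; split; left.
  + have [w Aw ->] := Nz _ _ Nz1.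
    case: Nz1 => [i [u [v [Hi Au Av -> _]]]].
    case: (liftA i u v Hi Au Av) => H1 H2; split => //.
    by right; exists w.
- move=> x y [Ax|[b [Ab ->]]] [Ay|[b' [Ab' ->]]].
  + by have [z Hz] := Gtot x y Ax Ay; exists z; left.
  + by eexists; right; exists 0, x, b'; split.
  + by eexists; right; exists 1, b, y; split.
  + by eexists; right; exists 2, b, b'; split.
- by right => i Hi; left; apply: Anu.
Qed.
End Main.

End CardC.

Local Open Scope fset_scope.

Lemma sel_exists n : 2 <= n -> forall k t, t <= n * k -> t != 1 ->
  (n = 2 -> ~~ odd t) ->
  exists s : seq (nat * nat), [/\ uniq s, size s = t,
    (forall p, p \in s -> p.1 < n /\ p.2 < k) &
    (forall p, p \in s -> exists2 p', p' \in s & p' != p /\ p'.2 = p.2)].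
Proof.
move=> n2; elim=> [|k IH] t.
  rewrite muln0 leqn0 => /eqP -> _ _; exists [::]; split => //.
move=> Ht Ht1 Hodd.
have [le|lt] := leqP t (n * k).
  have [s [us ss bs cs]] := IH t le Ht1 Hodd.
  exists s; split => // p /bs [? ?]; split => //; exact: ltnW.
have [c [c2 cn ct Q1 [Q2 Q3]]] : exists c, [/\ 2 <= c, c <= n, c <= t,
    t - c <= n * k & t - c != 1 /\ (n = 2 -> ~~ odd (t - c))].
  have [d2|d1] := leqP 2 (t - n * k).
    exists (t - n * k); split; try lia; split.
      rewrite subKn ?(ltnW lt) //.
      by rewrite muln_eq1; case: (n =P 1) n2 => // ->.
    move=> E; rewrite subKn ?(ltnW lt) // E; by rewrite oddM.
  have n3 : n != 2.
    apply/eqP => E; move: (Hodd E); rewrite E in lt Ht d1 *.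
    have -> : t = (2 * k).+1 by lia.
    by rewrite /= oddM.
  have k1 : 0 < k.
    case: k IH Ht lt d1 => // _ Ht lt d1; exfalso; move/eqP: Ht1; apply; lia.
  exists n.-1; split; try nia; split; try nia.
have [s [us ss bs cs]] := IH (t - c) Q1 Q2 Q3.
exists (s ++ [seq (j, k) | j <- iota 0 c]); split.
- rewrite cat_uniq us /= map_inj_uniq ?iota_uniq ?andbT; last by move=> ? ? [].
  apply/hasPn => p /mapP [j _ ->]; apply/negP => /bs [_] /=; by rewrite ltnn.
- by rewrite size_cat size_map size_iota ss; lia.
- move=> p; rewrite mem_cat => /orP [/bs [? ?]|/mapP [j]]; first by split => //; exact: ltnW.
  by rewrite mem_iota => /andP [_ ?] -> /=; split => //; lia.
- move=> p; rewrite mem_cat => /orP [/cs [p' p's [H1 H2]]|/mapP [j]].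
    by exists p' => //; rewrite mem_cat p's.
  rewrite mem_iota add0n => /andP [_ jc] ->.
  exists (if j == 0 then 1 else 0, k) => /=; last first.
    by split => //; case: (j =P 0) => [->|/eqP]; rewrite //= xpair_eqE ?eqxx ?andbT // eq_sym.
  rewrite mem_cat; apply/orP; right; apply/mapP; exists (if j == 0 then 1 else 0) => //.
  by rewrite mem_iota; case: (j == 0) => /=; lia.
Qed.


Lemma fset_code (L : choiceType) : infinite_type L ->
  exists code : {fset L} -> L, injective code.
Proof.
move=> HL; have [nu nuI] := nu_exists HL.
have [pr prI] := pairing nuI.
pose fix enc (s : seq L) := if s is x :: s' then pr (nu 1) (pr x (enc s')) else pr (nu 0) (nu 0).
have encI : injective enc.
  elim=> [|x s IH] [|y s'] //= E.
  - by case: (prI _ _ _ _ E) => /nuI.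
  - by case: (prI _ _ _ _ E) => /nuI.
  - case: (prI _ _ _ _ E) => _ /prI [-> /IH ->] //.
exists (fun H => enc (enum_fset H)) => H H' /encI E; exact: val_inj.
Qed.


Section Comb.
Variables (L : choiceType) (n : nat) (x0 : L).
Hypothesis n2 : 2 <= n.

Definition sj (H : {fset L}) j := H `\ nth x0 H j.

Lemma sjP H j : #|` H| = n -> j < n -> sj H j `<=` H /\ #|` sj H j| = n.-1.
Proof.
move=> Hn jn; split; first exact: fsubsetDl.
have hin : nth x0 H j \in H by apply: mem_nth; rewrite Hn.
by move: (cardfsD1 (nth x0 H j) H); rewrite hin Hn /sj add1n => ->.
Qed.

Lemma sj_inj H j j' : #|` H| = n -> j < n -> j' < n -> sj H j = sj H j' -> j = j'.
Proof.
move=> Hn jn j'n E; apply/eqP; apply: contraT => ne.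
have hin : nth x0 H j' \in H by apply: mem_nth; rewrite Hn.
have : nth x0 H j' \in sj H j.
  rewrite /sj in_fsetD1 hin andbT; apply/negP => /eqP.
  move/eqP; rewrite nth_uniq ?fset_uniq ?Hn // => /eqP ej; by rewrite ej eqxx in ne.
by rewrite E /sj in_fsetD1 eqxx.
Qed.

Lemma keyS (H H' s s' : {fset L}) : #|` H| = n -> #|` H'| = n -> H <> H' ->
  s `<=` H -> s `<=` H' -> s' `<=` H -> s' `<=` H' ->
  #|` s| = n.-1 -> #|` s'| = n.-1 -> s = s'.
Proof.
move=> Hn H'n neH sH sH' s'H s'H' sn s'n; apply/eqP; apply: contraT => ne.
have ns's : ~~ (s' `<=` s).
  apply/negP => s's; move: ne; rewrite eq_sym eqEfcard s's sn s'n leqnn.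
  by [].
have lt : #|` s| < #|` s `|` s'|.
  apply: fproper_ltn_card; rewrite fproperE fsubsetUl /= fsubUset fsubset_refl /=.
  exact: ns's.
have eqH : s `|` s' = H.
  apply/eqP; rewrite eqEfcard fsubUset sH s'H /= Hn; move: lt; rewrite sn; lia.
have eqH' : s `|` s' = H'.
  apply/eqP; rewrite eqEfcard fsubUset sH' s'H' /= H'n; move: lt; rewrite sn; lia.
by case: neH; rewrite -eqH -eqH'.
Qed.
End Comb.

Lemma card_fset_seq (T : choiceType) (s : seq T) : uniq s -> #|` [fset x in s]| = size s.
Proof. by move=> us; rewrite card_fseq undup_id. Qed.

Lemma mem_fset_seq (T : choiceType) (s : seq T) x : (x \in [fset y in s]) = (x \in s).
Proof. by rewrite in_fset. Qed.

Lemma card_inter0 (T : choiceType) (A B : {fset T}) :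
  (forall x, x \in A -> x \in B -> False) -> #|` A `&` B| = 0.
Proof.
move=> H; apply/eqP; rewrite cardfs_eq0; apply/eqP/fsetP => x.
rewrite in_fsetI inE; apply/negP => /andP [xa xb]; exact: H xa xb.
Qed.


Theorem theorem3p1 (L : choiceType) (M : Type) (n k : nat) :
  infinite_type L -> 2 <= n -> 1 <= k ->
  partition_rel L ('I_k -> M) n n.-1 ->
  forall t : nat,
    ((2 < n /\ k < t <= n * k) \/ (n = 2 /\ ~~ odd t /\ k < t <= 2 * k)) ->
    chiCF_sys_gt L t k.+1 M.
Proof.
move=> HL n2 k1 Hpart t Ht.
have [kt tn t1 todd] : [/\ k < t, t <= n * k, t != 1 & (n = 2 -> ~~ odd t)].
  case: Ht => [[n3 /andP [? ?]]|[-> [od /andP [? ?]]]]; split => //; try lia.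
have [sel [us ss bs cs]] := sel_exists n2 tn t1 todd.
have [x0 _] : exists x0 : L, True.
  apply: contrapT => N; apply: HL; exists [::] => x; case: N; by exists x.
have [code codeI] := fset_code HL.
pose X := (({fset L} * nat) + (L * nat))%type.
pose B (H : {fset L}) : {fset X} := [fset x in [seq inl (sj x0 H p.1, p.2) | p <- sel]].
pose J (i : L) : {fset X} := [fset x in [seq inr (i, j) | j <- iota 0 t]].
have : forall i, exists H, (exists H', #|` H'| = n /\ code H' = i) -> #|` H| = n /\ code H = i.
  move=> i; have [[H HH]|N] := pselect (exists H', #|` H'| = n /\ code H' = i).
    by exists H.
  by exists fset0 => E; case: N.
case/choice => inv invP.
pose Afam i := if pselect (exists H, #|` H| = n /\ code H = i) then B (inv i) else J i.
have Bmem H x : (x \in B H) = (x \in [seq inl (sj x0 H p.1, p.2) | p <- sel]).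
  by rewrite mem_fset_seq.
have Bsize H : #|` H| = n -> #|` B H| = t.
  move=> Hn; rewrite card_fset_seq ?size_map //.
  rewrite map_inj_in_uniq // => [[a b] [c d]] ps qs [E1 E2].
  case: (bs _ ps) => /= p1 _; case: (bs _ qs) => /= q1 _.
  by move: E1 => /(sj_inj Hn p1 q1) E; rewrite E E2.
have Binter H H' : #|` H| = n -> #|` H'| = n -> H <> H' -> #|` B H `&` B H'| <= k.
  move=> Hn H'n neH.
  have [[z]|N] := pselect (exists z, z \in B H `&` B H'); last first.
    by rewrite card_inter0 // => z z1 z2; apply: N; exists z; rewrite in_fsetI z1 z2.
  rewrite in_fsetI !Bmem => /andP [/mapP [p ps ->] /mapP [p' p's [E1 _]]].
  pose s0 := sj x0 H p.1.
  have sHP (q q' : nat * nat) : q \in sel -> q' \in sel -> sj x0 H q.1 = sj x0 H' q'.1 ->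
      sj x0 H q.1 = s0.
    move=> qs q's E.
    case: (bs q qs) => q1 _; case: (bs q' q's) => q'1 _; case: (bs p ps) => pp1 _;
      case: (bs p' p's) => p'1 _.
    case: (sjP x0 Hn q1) => sub1 c1; case: (sjP x0 H'n q'1) => sub2 c2.
    case: (sjP x0 Hn pp1) => sub3 c3; case: (sjP x0 H'n p'1) => sub4 c4.
    apply: (keyS n2 Hn H'n neH) => //; first by rewrite E.
    by rewrite /s0 E1.
  have sub : B H `&` B H' `<=` [fset x in [seq inl (s0, m) : X | m <- iota 0 k]].
    apply/fsubsetP => w; rewrite in_fsetI !Bmem mem_fset_seq.
    move=> /andP [/mapP [q qs ->] /mapP [q' q's [E1' E2']]].
    apply/mapP; exists q.2; first by rewrite mem_iota add0n; case: (bs q qs).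
    by rewrite (sHP q q').
  apply: leq_trans (fsubset_leq_card sub) _.
  by rewrite card_fseq (leq_trans (size_undup _)) // size_map size_iota.
have Jsize i : #|` J i| = t.
  rewrite card_fset_seq ?size_map ?size_iota //.
  by rewrite map_inj_uniq ?iota_uniq // => ? ? [].
have Jmem i x : (x \in J i) = (x \in [seq inr (i, j) : X | j <- iota 0 t]).
  by rewrite mem_fset_seq.
have JB i H x : x \in J i -> x \in B H -> False.
  by rewrite Jmem Bmem => /mapP [j _ ->] /mapP [p _].
have J0 i : (inr (i, 0) : X) \in J i.
  by rewrite Jmem; apply/mapP; exists 0 => //; rewrite mem_iota; lia.
have JJ i i' x : x \in J i -> x \in J i' -> i = i'.
  by rewrite !Jmem => /mapP [j _ ->] /mapP [j' _ [->]].
exists X, Afam; split.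
  split; [|split].
  - move=> i i'; rewrite /Afam.
    case: pselect => [ex|nex]; case: pselect => [ex'|nex'] /= E.
    + case: (invP i ex) => ni ci; case: (invP i' ex') => ni' ci'.
      have [eq|neq] := pselect (inv i = inv i'); first by rewrite -ci -ci' eq.
      have := Binter _ _ ni ni' neq; rewrite E fsetIid (Bsize _ ni') => tk.
      by exfalso; move: kt; rewrite ltnNge tk.
    + by exfalso; apply: (JB i' (inv i) _ (J0 i')); rewrite E.
    + by exfalso; apply: (JB i (inv i') _ (J0 i)); rewrite -E.
    + by apply: (JJ i i' (inr (i, 0))) (J0 i) _; rewrite -E.
  - move=> i; rewrite /Afam; case: pselect => [ex|nex].
      by case: (invP i ex) => ni _; exact: Bsize.
    exact: Jsize.
  - move=> i i' ne; rewrite /Afam; case: pselect => [ex|nex]; case: pselect => [ex'|nex'].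
    + case: (invP i ex) => ni ci; case: (invP i' ex') => ni' ci'.
      rewrite ltnS; apply: Binter => // E; apply: ne; by rewrite -ci -ci' E.
    + by rewrite card_inter0 // => x xb xj; exact: JB xj xb.
    + by rewrite card_inter0 // => x xj xb; exact: JB xj xb.
    + by rewrite card_inter0 // => x xj xj'; apply: ne; exact: JJ xj xj'.
move=> [f Hcf].
pose c (s : {fset L}) : 'I_k -> M := fun m => f (inl (s, val m)).
case: (Hpart c) => H [Hn [col Hcol]].
have ex : exists H', #|` H'| = n /\ code H' = code H by exists H.
case: (invP _ ex) => _ /codeI eqH.
case: (Hcf (code H)) => zeta [x [xin [fx xu]]].
move: xin; rewrite /Afam; case: pselect => [ex0|nex]; last by case: nex.
rewrite eqH Bmem => /mapP [p ps Ex].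
case: (cs p ps) => p' p's [ne e2].
case: (bs p ps) => p1 p2; case: (bs p' p's) => p'1 p'2.
have eqc s : s `<=` H -> #|` s| = n.-1 -> forall m : 'I_k, f (inl (s, val m)) = col m.
  by move=> sH sn m; rewrite -(Hcol s sH sn).
have fy : f (inl (sj x0 H p'.1, p'.2)) = zeta.
  rewrite -fx Ex.
  case: (sjP x0 Hn p1) => s1 c1; case: (sjP x0 Hn p'1) => s2 c2.
  have := eqc _ s1 c1 (Ordinal p2); have := eqc _ s2 c2 (Ordinal p2) => /=.
  by rewrite e2 => -> ->.
have yin : (inl (sj x0 H p'.1, p'.2) : X) \in Afam (code H).
  rewrite /Afam; case: pselect => [ex1|nex]; last by case: nex.
  by rewrite eqH Bmem; apply/mapP; exists p'.
have := xu _ yin fy; rewrite Ex => -[/(sj_inj Hn p'1 p1) e1 _].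
by move: ne; case: p p' {ps p's Ex p1 p2 p'1 p'2 fy yin} e1 e2 => a b [c' d] /= -> ->; rewrite eqxx.
Qed.
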